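(* Let $K$ be a virtual knot diagram and $n\geq 0$. Then $|C_n(K)|\geq \operatorname{span}V_K^n(t)$, where $\operatorname{span}$ denotes the difference between the highest and lowest exponents of $t$ occurring in the Laurent polynomial (in $t^{1/2}$) $V_K^n(t)$.
   Context: Virtual knot diagrams, real crossings with writhe $w(c)\in\{\pm1\}$, $w(K)=\sum_c w(c)$. Chord index: in the Gauss diagram (counterclockwise circle, one chord per real crossing directed from over- to under-preimage and signed by the writhe), for a chord $c$ let $r_\pm(c)$ (resp. $l_\pm(c)$) be the number of chords of sign $\pm$ whose endpoints interlace with those of $c$ and whose tail lies to the left (resp. right) of the arrow $c$ and head to the right (resp. left); $\mathrm{Ind}(c)=r_+(c)-r_-(c)-l_+(c)+l_-(c)$. For $n\geq 0$ let $C_n(K)=\{c \text{ real crossing}: \mathrm{Ind}(c)=kn \text{ for some } k\in\mathbb{Z}\}$. A state $S$ is obtained by smoothing every crossing of $C_n(K)$ by either the $0$-smoothing ($A$-smoothing of the Kauffman bracket) or the $1$-smoothing ($B$-smoothing), leaving all other crossings unchanged; $S$ is a virtual link diagram with $|S|$ components, and $\#_0,\#_1$ count the $0$- and $1$-smoothings used. $\langle K\rangle_n=\sum_S A^{\#_0-\#_1}(-A^2-A^{-2})^{|S|-1}$ and $V_K^n(t)=(-A^3)^{-w(K)}\langle K\rangle_n\big|_{A=t^{-1/4}}$. *)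

(* Defs.v *)
From HB Require Import structures.
From mathcomp Require Import all_boot all_order all_algebra.
Set Implicit Arguments. Unset Strict Implicit. Unset Printing Implicit Defensive.
Import Order.TTheory GRing.Theory Num.Theory.
Local Open Scope ring_scope.

(* Signed Gauss diagrams.  A virtual knot diagram with m real crossings is *)
(* encoded (Goussarov-Polyak-Viro) by its Gauss diagram: the 2m preimages *)
(* of the real crossings are the points 0,1,...,2m-1 placed on a circle in *)
(* counterclockwise order (= the orientation of the knot).  Crossing c     *)
(* gives an arrow from its over-preimage [gtail c] to its under-preimage   *)
(* [ghead c], with sign [gsign c] (true = +1, false = -1) = writhe of c.   *)
(* Virtual crossings are not recorded: they play no role in any of the    *)
(* quantities involved.                                                   *)
Record gauss_diagram := GaussDiagram {
  ncross : nat;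
  gtail : 'I_ncross -> 'I_(ncross.*2);
  ghead : 'I_ncross -> 'I_(ncross.*2);
  gsign : 'I_ncross -> bool }.
Unset Implicit Arguments.

Definition valid_gauss (G : gauss_diagram) : Prop :=
  injective (fun x : 'I_(ncross G) * bool =>
               if x.2 then @gtail G x.1 else @ghead G x.1).

Definition sign_int (b : bool) : int := if b then 1 else -1.

Definition writhe (G : gauss_diagram) : int :=
  \sum_(c : 'I_(ncross G)) sign_int (@gsign G c).

(* x lies on the open counterclockwise arc from a to b (positions mod N) *)
Definition in_arc (N : nat) (x a b : nat) : bool :=
  (0 < (x + N - a) %% N < (b + N - a) %% N)%N.

(* Contribution of chord d to Ind(c).  The right side of the arrow c is the *)
(* open ccw arc from tail c to head c, the left side the open ccw arc from  *)
(* head c to tail c.  d counts in r_(sign d) if its tail is on the left and *)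
(* its head on the right, in l_(sign d) in the opposite situation.          *)
Definition ind_contrib (G : gauss_diagram) (c d : 'I_(ncross G)) : int :=
  let N := (ncross G).*2 in
  let a := val (@gtail G c) in let b := val (@ghead G c) in
  let right x := in_arc N x a b in
  let left x := in_arc N x b a in
  if left (@gtail G d) && right (@ghead G d) then sign_int (@gsign G d)
  else if right (@gtail G d) && left (@ghead G d) then - sign_int (@gsign G d)
  else 0.

(* Ind(c) = r_+(c) - r_-(c) - l_+(c) + l_-(c) *)
Definition chord_index (G : gauss_diagram) (c : 'I_(ncross G)) : int :=
  \sum_(d | d != c) ind_contrib G c d.

(* C_n(K) = { c | Ind(c) = k n for some integer k }  (for n = 0: Ind(c) = 0) *)
Definition Cn (G : gauss_diagram) (n : nat) : {set 'I_(ncross G)} :=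
  [set c | (n%:Z %| chord_index G c)%Z].

(* A state is s : {ffun chords -> bool} with s c = false for c \notin C_n; *)
(* for c \in C_n, s c = false is the 0-(A-)smoothing, true the 1-(B-)one.  *)
(* The resulting virtual link diagram is modelled by the graph whose       *)
(* vertices are the ends (p, false) = incoming, (p, true) = outgoing, of   *)
(* the knot at the 2m preimage points p; edges are the arcs of the knot    *)
(* between consecutive preimages ((p,out) -- (p+1,in)) together with the   *)
(* local connections at each real crossing with preimages p (tail), q:     *)
(*   unsmoothed:          (p,in)-(p,out),  (q,in)-(q,out)                  *)
(*   oriented smoothing:  (p,in)-(q,out),  (q,in)-(p,out)                  *)
(*   unoriented smoothing:(p,in)-(q,in),   (p,out)-(q,out)                 *)
(* The A-smoothing is the oriented one at a positive crossing and the      *)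
(* unoriented one at a negative crossing (and conversely for B).           *)
(* |S| is the number of connected components of this graph (1 if m = 0).  *)
Definition state (G : gauss_diagram) := {ffun 'I_(ncross G) -> bool}.

Definition admissible (G : gauss_diagram) (n : nat) (s : state G) : bool :=
  [forall c, (c \notin Cn G n) ==> ~~ s c].

Definition vertex (G : gauss_diagram) := ('I_((ncross G).*2) * bool)%type.

Definition upair (T : eqType) (x y u v : T) : bool :=
  ((x == u) && (y == v)) || ((x == v) && (y == u)).

Definition cross_edge (G : gauss_diagram) (n : nat) (s : state G)
    (c : 'I_(ncross G)) (x y : vertex G) : bool :=
  let p := @gtail G c in let q := @ghead G c in
  if c \notin Cn G n then
    upair _ x y (p, false) (p, true) || upair _ x y (q, false) (q, true)
  else if @gsign G c != s c then
    upair _ x y (p, false) (q, true) || upair _ x y (q, false) (p, true)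
  else
    upair _ x y (p, false) (q, false) || upair _ x y (p, true) (q, true).

Definition arc_edge (G : gauss_diagram) (x y : vertex G) : bool :=
  upair _ x y (x.1, true) (ordS x.1, false) || upair _ x y (y.1, true) (ordS y.1, false).

Definition state_rel (G : gauss_diagram) (n : nat) (s : state G) : rel (vertex G) :=
  fun x y => arc_edge G x y || [exists c, cross_edge G n s c x y].

Definition ncomp (G : gauss_diagram) (n : nat) (s : state G) : nat :=
  if ncross G == 0%N then 1%N else n_comp (state_rel G n s) predT.

(* Laurent polynomials as finite lists of monomials (exponent, coeff).    *)
Definition lpoly := seq (int * int).

Definition lmul (p q : lpoly) : lpoly :=
  [seq (x.1 + y.1, x.2 * y.2) | x <- p, y <- q].

Definition lpow (p : lpoly) (k : nat) : lpoly := iter k (lmul p) [:: (0, 1)].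

Definition lcoef (p : lpoly) (e : int) : int := \sum_(x <- p | x.1 == e) x.2.

Definition lsupp (p : lpoly) : seq int :=
  [seq e <- undup (map fst p) | lcoef p e != 0].

(* highest minus lowest occurring exponent (0 for the zero polynomial) *)
Definition lspan (p : lpoly) : int :=
  foldr Num.max 0 [seq e1 - e2 | e1 <- lsupp p, e2 <- lsupp p].

(* d = -A^2 - A^-2 (exponents of A) *)
Definition loopA : lpoly := [:: (2%:Z, -1); (-2, -1)].

Definition bracket (G : gauss_diagram) (n : nat) : lpoly :=
  flatten [seq lmul [:: ((#|[set c in Cn G n | ~~ s c]|)%:Z
                           - (#|[set c in Cn G n | s c]|)%:Z, 1)]
                    (lpow loopA (ncomp G n s).-1)
          | s : state G <- enum [pred s : state G | admissible G n s]].

(* V_K^n written in the variable u = t^(1/4): since A = t^(-1/4) = u^-1,  *)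
(* (-A^3)^(-w) A^e = (-1)^w u^(3w - e).                                   *)
Definition jonesV_u (G : gauss_diagram) (n : nat) : lpoly :=
  [seq (3 * writhe G - x.1, (-1) ^+ `|writhe G|%N * x.2) | x <- bracket G n].

(* span in t = (span in u = t^(1/4)) / 4 *)
Definition span_t (G : gauss_diagram) (n : nat) : rat :=
  (lspan (jonesV_u G n))%:~R / 4%:R.

(* Main.v *)
From HB Require Import structures.
From mathcomp Require Import all_boot all_order all_algebra.
From mathcomp Require Import zify.
Require Import Defs.
Set Implicit Arguments. Unset Strict Implicit. Unset Printing Implicit Defensive.


Lemma upairC (T : eqType) (x y u v : T) : upair _ x y u v = upair _ y x u v.
Proof. by rewrite /upair orbC [(y == u) && _]andbC [(y == v) && _]andbC. Qed.

Definition addE (T : finType) (e : rel T) (x y : T) : rel T :=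
  fun u v => e u v || upair _ u v x y.

Section AddEdge.
Variables (T : finType) (e : rel T) (x y : T).
Hypothesis sym_e : symmetric e.
Let e' := addE e x y.
Lemma addE_sym : symmetric e'.
Proof. by move=> u v; rewrite /e' /addE sym_e upairC. Qed.
Let csym : connect_sym e := sym_connect_sym sym_e.
Let csym' : connect_sym e' := sym_connect_sym addE_sym.

Lemma sub_addE : subrel (connect e) (connect e').
Proof. apply: connect_sub => u v euv; apply: connect1; by rewrite /e' /addE euv. Qed.

Lemma closure2P z : (z \in closure e (pred2 x y)) = connect e z x || connect e z y.
Proof.
apply/idP/idP.
  case/pred0Pn => t /andP[ezt xyt]; move: ezt xyt; rewrite !inE /= => ezt.
  by case/pred2P=> ht; subst t; rewrite ezt ?orbT.
case/orP=> h; apply/pred0Pn; [exists x | exists y]; by rewrite /= !inE h ?eqxx ?orbT.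
Qed.

Let B := closure e (pred2 x y).

Lemma out_conn z w : z \notin B -> connect e' z w -> connect e z w.
Proof.
move=> zB /connectP[p pp ->]; elim: p z zB pp => //= v p IH z zB /andP[ezv pv].
have ezv' : e z v.
  move: ezv; rewrite /e' /addE => /orP[//|/orP[]/andP[/eqP zx _]];
  by move: zB; rewrite closure2P zx connect0 ?orbT.
have vB : v \notin B by rewrite -(closure_closed csym _ ezv').
exact: connect_trans (connect1 ezv') (IH _ vB pv).
Qed.

Lemma inB z : (z \in B) = connect e' x z.
Proof.
apply/idP/idP.
  rewrite closure2P => /orP[] h; rewrite csym'.
    by apply: sub_addE.
  apply: connect_trans (sub_addE h) _; rewrite csym'; apply: connect1.
  by rewrite /e' /addE /upair !eqxx orbT.
apply: contraLR => zB; rewrite csym'; apply/negP => h.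
by move: (zB); rewrite closure2P (out_conn zB h).
Qed.

Lemma n_comp_addE : n_comp e' predT + ~~ connect e x y = n_comp e predT.
Proof.
rewrite (n_compC B e) (n_compC (connect e' x) e') (n_comp_closure2 csym).
rewrite (n_comp_connect csym') add1n addSnnS addnC; congr (_ + _).
apply: eq_card => z; rewrite !inE -inB.
case zB: (z \in B) => //=; rewrite ?andbT ?andbF /roots /root //.
congr (odflt z _ == z); apply: eq_pick => w. apply/idP/idP; first by apply: out_conn; rewrite zB.
exact: sub_addE.
Qed.

Lemma conn_addE u v : connect e' u v =
  [|| connect e u v, connect e u x && connect e y v | connect e u y && connect e x v].
Proof.
apply/idP/idP; last first.
  have exy : connect e' x y by apply: connect1; rewrite /e' /addE /upair !eqxx orbT.
  case/or3P=> [/sub_addE//|/andP[h1 h2]|/andP[h1 h2]].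
    exact: connect_trans (sub_addE h1) (connect_trans exy (sub_addE h2)).
  by apply: connect_trans (sub_addE h1) (connect_trans _ (sub_addE h2)); rewrite csym'.
set Q := fun v => [|| connect e u v, connect e u x && connect e y v | connect e u y && connect e x v].
suff : closed e' Q.
  by move=> cl h; have := closed_connect cl h; rewrite !unfold_in /Q /= connect0 => <-.
apply: (intro_closed csym') => a b; rewrite /e' /addE !unfold_in /Q /=.
case/orP=> [eab|/orP[]/andP[/eqP-> /eqP->]].
- have cab := connect1 eab; case/or3P=> [h|/andP[->h]|/andP[->h]].
  + by rewrite (connect_trans h cab).
  + by rewrite (connect_trans h cab) orbT.
  + by rewrite (connect_trans h cab) !orbT.
- case/or3P=> [->|/andP[->]|/andP[->]] //; by rewrite connect0 ?orbT.
- case/or3P=> [->|/andP[->]|/andP[->]] //; by rewrite connect0 ?orbT.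
Qed.
End AddEdge.

Lemma two_edges (T : finType) (e e' : rel T) (x1 y1 x2 y2 : T) :
  symmetric e -> e' =2 addE (addE e x1 y1) x2 y2 ->
  n_comp e' predT + ~~ [|| connect e x2 y2,
        connect e x2 x1 && connect e y1 y2 | connect e x2 y1 && connect e x1 y2]
   + ~~ connect e x1 y1 = n_comp e predT.
Proof.
move=> sH ee.
have E1 := n_comp_addE x1 y1 sH.
have s1 := addE_sym x1 y1 sH.
have E2 := n_comp_addE x2 y2 s1.
have C2 := conn_addE x1 y1 sH x2 y2.
have E3 : n_comp e' predT = n_comp (addE (addE e x1 y1) x2 y2) predT.
  apply: eq_n_comp; exact: eq_connect ee.
by rewrite -C2 E3 E2 E1.
Qed.


Lemma tri4 (T : finType) (C : rel T) (a b c d : T) (v0 v1 v2 N : nat) : symmetric C ->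
 (forall x y z, C x y -> C y z -> C x z) ->
 v0 + ~~ [|| C c d, C c a && C b d | C c b && C a d] + ~~ C a b = N ->
 v1 + ~~ [|| C c b, C c a && C d b | C c d && C a b] + ~~ C a d = N ->
 v2 + ~~ [|| C b d, C b a && C c d | C b c && C a d] + ~~ C a c = N ->
 [&& v1 <= v2.+1, v2 <= v1.+1 & minn v1 v2 <= v0].
Proof.
move=> sC tC.
have T3 x y z : C x y ==> C y z ==> C x z by apply/implyP=> h1; apply/implyP; exact: tC h1.
have := T3 a b c.
have := T3 a b d.
have := T3 a c b.
have := T3 a c d.
have := T3 a d b.
have := T3 a d c.
have := T3 b a c.
have := T3 b a d.
have := T3 b c a.
have := T3 b c d.
have := T3 b d a.
have := T3 b d c.
have := T3 c a b.
have := T3 c a d.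
have := T3 c b a.
have := T3 c b d.
have := T3 c d a.
have := T3 c d b.
have := T3 d a b.
have := T3 d a c.
have := T3 d b a.
have := T3 d b c.
have := T3 d c a.
have := T3 d c b.
rewrite ?(sC b a) ?(sC c a) ?(sC d a) ?(sC c b) ?(sC d b) ?(sC d c).
case: (C a b); case: (C a c); case: (C a d); case: (C b c); case: (C b d); case: (C c d) => //=; lia.
Qed.


Section Knot.
Variable G : gauss_diagram.
Local Notation m := (ncross G).
Local Notation V := (vertex G).

Definition ends (c : 'I_m) (t : nat) : (V * V) * (V * V) :=
  let a := (gtail c, false) in let b := (gtail c, true) in
  let cc := (ghead c, false) in let d := (ghead c, true) in
  if t == 0 then ((a, b), (cc, d)) else if t == 1 then ((a, d), (cc, b))
  else ((a, cc), (b, d)).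

Definition loc (c : 'I_m) (t : nat) (x y : V) : bool :=
  upair _ x y (ends c t).1.1 (ends c t).1.2 || upair _ x y (ends c t).2.1 (ends c t).2.2.

Definition Rk (k : 'I_m -> nat) : rel V :=
  fun x y => arc_edge G x y || [exists c, loc c (k c) x y].
Fact cnt_key : unit. Proof. exact: tt. Qed.
Definition cnt k := locked_with cnt_key (n_comp (Rk k) predT).
Lemma cntE k : cnt k = n_comp (Rk k) predT. Proof. by rewrite /cnt unlock. Qed.
Definition upd (k : 'I_m -> nat) c t := fun d => if d == c then t else k d.
Definition Hk (k : 'I_m -> nat) c : rel V :=
  fun x y => arc_edge G x y || [exists d, (d != c) && loc d (k d) x y].

Lemma arc_sym : symmetric (arc_edge G).
Proof. by move=> x y; rewrite /arc_edge orbC; congr (_ || _); apply: upairC. Qed.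

Lemma loc_sym c t : symmetric (loc c t).
Proof. by move=> x y; rewrite /loc; congr (_ || _); apply: upairC. Qed.

Lemma Rk_sym k : symmetric (Rk k).
Proof.
move=> x y; rewrite /Rk arc_sym; congr (_ || _).
by apply: eq_existsb => c; rewrite loc_sym.
Qed.

Lemma Hk_sym k c : symmetric (Hk k c).
Proof.
move=> x y; rewrite /Hk arc_sym; congr (_ || _).
by apply: eq_existsb => d; rewrite loc_sym.
Qed.

Lemma cnt_ext k k' : k =1 k' -> cnt k = cnt k'.
Proof.
move=> kk; rewrite !cntE; apply: eq_n_comp; apply: eq_connect => x y.
by rewrite /Rk; congr (_ || _); apply: eq_existsb => c; rewrite kk.
Qed.

Lemma Rk_upd k c t : Rk (upd k c t) =2
  addE (addE (Hk k c) (ends c t).1.1 (ends c t).1.2) (ends c t).2.1 (ends c t).2.2.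
Proof.
move=> x y; rewrite /Rk /addE /Hk /upd.
have -> : [exists d, loc d (if d == c then t else k d) x y] =
   loc c t x y || [exists d, (d != c) && loc d (k d) x y].
  apply/existsP/orP => [[d]|[h|/existsP[d /andP[dc h]]]].
  - by case: eqP => [-> h|/eqP dc h]; [left | right; apply/existsP; exists d; rewrite dc].
  - by exists c; rewrite eqxx.
  - by exists d; rewrite (negbTE dc).
rewrite /loc; set A := arc_edge G x y; set E := [exists d, _].
set U1 := upair _ x y (ends c t).1.1 _; set U2 := upair _ x y (ends c t).2.1 _.
by case: A; case: E; case: U1; case: U2.
Qed.

Lemma cnt_upd k c t :
  cnt (upd k c t) + ~~ [|| connect (Hk k c) (ends c t).2.1 (ends c t).2.2,
        connect (Hk k c) (ends c t).2.1 (ends c t).1.1 && connect (Hk k c) (ends c t).1.2 (ends c t).2.2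
      | connect (Hk k c) (ends c t).2.1 (ends c t).1.2 && connect (Hk k c) (ends c t).1.1 (ends c t).2.2]
   + ~~ connect (Hk k c) (ends c t).1.1 (ends c t).1.2 = n_comp (Hk k c) predT.
Proof. rewrite cntE; exact: two_edges (Hk_sym k c) (Rk_upd k c t). Qed.
Lemma tri_step k c :
  [&& cnt (upd k c 1) <= (cnt (upd k c 2)).+1,
      cnt (upd k c 2) <= (cnt (upd k c 1)).+1 &
      minn (cnt (upd k c 1)) (cnt (upd k c 2)) <= cnt (upd k c 0)].
Proof.
have h0 := cnt_upd k c 0; have h1 := cnt_upd k c 1; have h2 := cnt_upd k c 2.
rewrite /ends /= in h0 h1 h2.
exact: tri4 (sym_connect_sym (Hk_sym k c))
   (fun x y z => @connect_trans _ (Hk k c) y x z) h0 h1 h2.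
Qed.
Definition pm12 (t1 t2 : nat) := ((t1 == 1) && (t2 == 2)) || ((t1 == 2) && (t2 == 1)).

Lemma step_le k c t1 t2 : pm12 t1 t2 -> cnt (upd k c t1) <= (cnt (upd k c t2)).+1.
Proof.
have /and3P[h1 h2 _] := tri_step k c.
case/orP=> /andP[/eqP-> /eqP->]; [exact: h1 | exact: h2].
Qed.

Lemma step_min k c t1 t2 : pm12 t1 t2 ->
  minn (cnt (upd k c t1)) (cnt (upd k c t2)) <= cnt (upd k c 0).
Proof.
have /and3P[_ _ h] := tri_step k c.
case/orP=> /andP[/eqP-> /eqP->]; [exact: h | rewrite minnC; exact: h].
Qed.

Lemma upd_id k c : upd k c (k c) =1 k.
Proof. by move=> d; rewrite /upd; case: eqP => [->|]. Qed.

Lemma cnt_diff (D : {set 'I_m}) k k' :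
  (forall d, d \notin D -> k d = k' d) ->
  (forall d, d \in D -> (k d == 1) || (k d == 2)) ->
  (forall d, d \in D -> (k' d == 1) || (k' d == 2)) ->
  cnt k <= cnt k' + #|D|.
Proof.
move Hn : #|D| => n; elim: n D k' Hn => [|n IH] D k' Hn out hk hk'.
  rewrite addn0 (@cnt_ext k k'); first exact: leqnn.
  move=> d; apply: out.
  by move/eqP: Hn; rewrite cards_eq0 => /eqP->; rewrite inE.
have [d dD] : exists d, d \in D.
  by apply/set0Pn; rewrite -cards_eq0 Hn.
set k'' := upd k' d (k d).
have Hn' : #|D :\ d| = n by move: Hn; rewrite (cardsD1 d D) dD add1n => -[].
have le1 := IH (D :\ d) k'' Hn'.
have le2 : cnt k'' <= (cnt k').+1.
  have e1 : cnt k' = cnt (upd k' d (k' d)) by apply: cnt_ext => x; rewrite upd_id.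
  rewrite e1 /k''.
  case: (eqVneq (k d) (k' d)) => [->|ne]; first exact: leqnSn.
  apply: step_le; move: (hk d dD) (hk' d dD) ne.
  by rewrite /pm12; case/orP=> /eqP->; case/orP=> /eqP->.
have : cnt k <= cnt k'' + n.
  apply: le1.
  - move=> x; rewrite !inE negb_and negbK /k'' /upd => /orP[/eqP->|xD]; first by rewrite eqxx.
    by case: eqP => [->|_]; [|apply: out].
  - by move=> x; rewrite !inE => /andP[_]; apply: hk.
  - move=> x; rewrite !inE /k'' /upd => /andP[/negbTE-> xD]; exact: hk'.
lia.
Qed.
Lemma cnt_AB (X : {set 'I_m}) k (A B : 'I_m -> nat) :
  (forall d, d \in X -> k d = 0) -> (forall d, pm12 (A d) (B d)) ->
  cnt (fun d => if d \in X then A d else k d) +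
  cnt (fun d => if d \in X then B d else k d) <= #|X| + 2 * cnt k.
Proof.
move Hn : #|X| => n; elim: n X k A B Hn => [|n IH] X k A B Hn k0 hAB.
  have X0 : X = set0 by apply/eqP; rewrite -cards_eq0 Hn.
  have e1 : cnt (fun d => if d \in X then A d else k d) = cnt k.
    by apply: cnt_ext => d; rewrite X0 inE.
  have e2 : cnt (fun d => if d \in X then B d else k d) = cnt k.
    by apply: cnt_ext => d; rewrite X0 inE.
  rewrite e1 e2 add0n mul2n -addnn; exact: leqnn.
have [x xX] : exists x, x \in X by apply/set0Pn; rewrite -cards_eq0 Hn.
have Hn' : #|X :\ x| = n by move: Hn; rewrite (cardsD1 x X) xX add1n => -[].
have ek : cnt (upd k x 0) = cnt k.
  by apply: cnt_ext => d; rewrite /upd; case: eqP => [->|]; [rewrite k0|].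
wlog hA : A B hAB / cnt (upd k x (A x)) <= cnt k.
  move=> W; have := step_min k x (hAB x); rewrite ek geq_min => /orP[h|h].
    exact: W.
  rewrite addnC; apply: (W B A); last exact: h.
  move=> d; move: (hAB d); rewrite /pm12 orbC.
  by case: (A d == 1); case: (B d == 2); case: (A d == 2); case: (B d == 1).
set kA := upd k x (A x).
have := IH (X :\ x) kA A B Hn'.
have eA : cnt (fun d => if d \in X :\ x then A d else kA d) =
          cnt (fun d => if d \in X then A d else k d).
  apply: cnt_ext => d; rewrite !inE /kA /upd.
  by case: eqP => [->|_]; rewrite ?xX.
set fB := (fun d => if d \in X then B d else k d).
have eB : cnt (fun d => if d \in X :\ x then B d else kA d) = cnt (upd fB x (A x)).
  apply: cnt_ext => d; rewrite !inE /kA /fB /upd.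
  by case: eqP => [->|_]; rewrite ?xX.
have eB' : cnt fB = cnt (upd fB x (B x)).
  apply: cnt_ext => d; rewrite /fB /upd.
  by case: eqP => [->|_]; rewrite ?xX.
have sB : cnt (upd fB x (B x)) <= (cnt (upd fB x (A x))).+1.
  apply: step_le; move: (hAB x); rewrite /pm12 orbC.
  by case: (A x == 1); case: (B x == 2); case: (A x == 2); case: (B x == 1).
rewrite eA eB.
have k0' : forall d, d \in X :\ x -> kA d = 0.
  by move=> d; rewrite !inE /kA /upd => /andP[/negbTE-> /k0].
move=> /(_ k0' hAB) h.
rewrite -eB' in sB.
have hA' : cnt kA <= cnt k := hA.
lia.
Qed.
Definition k0 : 'I_m -> nat := fun _ => 0.

Lemma cnt_pos k : 0 < m -> 0 < cnt k.
Proof.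
move=> m0; have m2 : 0 < m.*2 by rewrite double_gt0.
set v0 : V := (Ordinal m2, false).
rewrite cntE; apply/card_gt0P; exists (fingraph.root (Rk k) v0).
by rewrite !inE andbT; apply: roots_root; apply: sym_connect_sym; apply: Rk_sym.
Qed.

Lemma covered (p : 'I_(m.*2)) : valid_gauss G ->
  exists c, (gtail c == p) || (ghead c == p).
Proof.
move=> vG.
have cd : #|{: 'I_m * bool}| >= #|{: 'I_(m.*2)}|.
  by rewrite card_prod !card_ord card_bool muln2.
have := inj_card_onto vG cd p; case/codomP => [[c b]] /= ->.
by exists c; case: b; rewrite eqxx ?orbT.
Qed.

Lemma cnt_k0 : valid_gauss G -> 0 < m -> cnt k0 = 1.
Proof.
move=> vG m0; have m2 : 0 < m.*2 by rewrite double_gt0.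
set v0 : V := (Ordinal m2, false).
have loc0 (p : 'I_(m.*2)) : Rk k0 (p, false) (p, true).
  have [c hc] := covered p vG; apply/orP; right; apply/existsP; exists c.
  rewrite /loc /ends /k0 /= /upair.
  by case/orP: hc => /eqP->; rewrite !eqxx ?orbT.
have arc (p : 'I_(m.*2)) : Rk k0 (p, true) (ordS p, false).
  by apply/orP; left; rewrite /arc_edge /upair /= !eqxx.
have call : forall i (hi : i < m.*2), connect (Rk k0) v0 (Ordinal hi, false).
  elim=> [|i IH] hi.
    by apply: eq_connect0; congr (_, _); apply: val_inj.
  have hi' : i < m.*2 by apply: ltnW.
  apply: connect_trans (IH hi') _.
  apply: connect_trans (connect1 (loc0 _)) _.
  apply: connect1.
  have -> : Ordinal hi = ordS (Ordinal hi') by apply: val_inj; rewrite /= modn_small.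
  exact: arc.
have cv (v : V) : connect (Rk k0) v0 v.
  case: v => [[i hi] b]; apply: connect_trans (call i hi) _.
  case: b; last exact: connect0.
  exact: connect1 (loc0 _).
rewrite cntE (@eq_n_comp_r _ _ predT (connect (Rk k0) v0)); last by move=> v; rewrite !inE cv.
by apply: n_comp_connect; apply: sym_connect_sym; apply: Rk_sym.
Qed.
Variable n : nat.
Definition kind (s : state G) (c : 'I_m) : nat :=
  if c \in Cn G n then (if gsign c != s c then 1 else 2) else 0.

Lemma ncompE s : 0 < m -> ncomp G n s = cnt (kind s).
Proof.
move=> m0; rewrite /ncomp (negbTE (lt0n_neq0 m0)) cntE.
apply: eq_n_comp; apply: eq_connect => x y; rewrite /state_rel /Rk; congr (_ || _).
apply: eq_existsb => c; rewrite /cross_edge /loc /kind /ends.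
by case: (c \in Cn G n); case: (gsign c != s c).
Qed.

Lemma state_bound s s' : valid_gauss G -> 0 < m ->
  ncomp G n s + ncomp G n s' <= #|Cn G n| + 2 + #|[set c in Cn G n | s c]|
     + #|[set c in Cn G n | ~~ s' c]|.
Proof.
move=> vG m0; rewrite !ncompE //.
set A := fun d : 'I_m => if gsign d != false then 1 else 2.
set B := fun d : 'I_m => if gsign d != true then 1 else 2.
have hAB : forall d, pm12 (A d) (B d) by move=> d; rewrite /A /B /pm12; case: (gsign d).
have h3 := @cnt_AB (Cn G n) k0 A B (fun _ _ => erefl) hAB.
rewrite cnt_k0 // in h3.
have h1 : cnt (kind s) <= cnt (fun d => if d \in Cn G n then A d else k0 d)
            + #|[set c in Cn G n | s c]|.
  apply: cnt_diff.
  - move=> d; rewrite /kind /A /k0; case hd: (d \in Cn G n) => //.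
    by rewrite in_set hd /= => /negbTE->.
  - by move=> d; rewrite in_set /kind => /andP[-> _]; case: (_ != _).
  - by move=> d; rewrite in_set /A => /andP[-> _]; case: (_ != _).
have h2 : cnt (kind s') <= cnt (fun d => if d \in Cn G n then B d else k0 d)
            + #|[set c in Cn G n | ~~ s' c]|.
  apply: cnt_diff.
  - move=> d; rewrite /kind /B /k0; case hd: (d \in Cn G n) => //.
    by rewrite in_set hd /= negbK => ->.
  - by move=> d; rewrite in_set /kind => /andP[-> _]; case: (_ != _).
  - by move=> d; rewrite in_set /B => /andP[-> _]; case: (_ != _).
lia.
Qed.
End Knot.

Import Order.TTheory GRing.Theory Num.Theory.

Lemma lpow_bound (j : nat) (x : int * int) : x \in lpow loopA j ->
  (- (2 * j)%:Z <= x.1 <= (2 * j)%:Z)%R.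
Proof.
elim: j x => [|j IH] x /=.
  by rewrite inE => /eqP->.
case/allpairsP => [[a b]] /= [ha hb ->] /=.
have := IH _ hb; move: ha; rewrite !inE => /orP[]/eqP-> /=; lia.
Qed.

Lemma bracket_mem G n (x : int * int) : x \in bracket G n ->
  exists s : state G,
   let e := ((#|[set c in Cn G n | ~~ s c]|)%:Z - (#|[set c in Cn G n | s c]|)%:Z)%R in
   (e - (2 * (ncomp G n s).-1)%:Z <= x.1 <= e + (2 * (ncomp G n s).-1)%:Z)%R.
Proof.
case/flattenP => l /mapP[s _ ->] /allpairsP[[a b]] /= [ha hb ->] /=.
exists s; move: ha; rewrite inE => /eqP-> /=.
have := lpow_bound hb; lia.
Qed.

Lemma ncomp_pos G n s : (0 < ncomp G n s)%N.
Proof.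
case: (posnP (ncross G)) => m0.
  by rewrite /ncomp (_ : (ncross G == 0) = true) // m0.
by rewrite ncompE //; apply: cnt_pos.
Qed.

Lemma bound2 G n (s s' : state G) : valid_gauss G ->
  (ncomp G n s + ncomp G n s' <= #|Cn G n| + 2 + #|[set c in Cn G n | s c]|
     + #|[set c in Cn G n | ~~ s' c]|)%N.
Proof.
move=> vG; case: (posnP (ncross G)) => m0; last exact: state_bound.
rewrite /ncomp (_ : (ncross G == 0) = true) ?m0 //; lia.
Qed.

Lemma cardsplit G n (s : state G) :
  (#|[set c in Cn G n | s c]| + #|[set c in Cn G n | ~~ s c]| = #|Cn G n|)%N.
Proof.
rewrite -(cardsID [set c | s c] (Cn G n)); congr (_ + _)%N; apply: eq_card => c;
  by rewrite !inE andbC.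
Qed.

Lemma diff_bound G n (x y : int * int) : valid_gauss G ->
  x \in bracket G n -> y \in bracket G n ->
  (y.1 - x.1 <= 4 * (#|Cn G n|)%:Z)%R.
Proof.
move=> vG /bracket_mem[s hs] /bracket_mem[s' hs'].
have b := bound2 n s' s vG.
have p1 := ncomp_pos n s; have p2 := ncomp_pos n s'.
have c1 := cardsplit n s; have c2 := cardsplit n s'.
move: hs hs' b p1 p2 c1 c2 => /=.
move: (ncomp G n s) (ncomp G n s') => c c'.
move: (#|[set c in Cn G n | s c]|) (#|[set c in Cn G n | ~~ s c]|) => b a.
move: (#|[set c in Cn G n | s' c]|) (#|[set c in Cn G n | ~~ s' c]|) => b' a'.
move: (#|Cn G n|) => k.
lia.
Qed.

Lemma foldr_max_le (l : seq int) (M : int) : (0 <= M)%R ->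
  (forall z, z \in l -> z <= M)%R -> (foldr Num.max 0 l <= M)%R.
Proof.
move=> M0; elim: l => [|z l IH] //= h.
rewrite ge_max h ?inE ?eqxx //= IH // => w wl; apply: h; rewrite inE wl orbT //.
Qed.

Lemma lspan_bound G n : valid_gauss G ->
  (lspan (jonesV_u G n) <= 4 * (#|Cn G n|)%:Z)%R.
Proof.
move=> vG; apply: foldr_max_le; first by [].
move=> z /allpairsP[[e1 e2]] /= [h1 h2 ->].
have mem_fst e : e \in lsupp (jonesV_u G n) ->
    exists2 x, x \in bracket G n & e = (3 * writhe G - x.1)%R.
  rewrite mem_filter mem_undup => /andP[_ /mapP[y /mapP[x hx ->] ->]].
  by exists x.
have [x hx ->] := mem_fst _ h1; have [y hy ->] := mem_fst _ h2.
have := diff_bound vG hx hy; move: (x.1) (y.1) (writhe G) (#|Cn G n|) => a b w k; lia.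
Qed.

Local Open Scope ring_scope.
Theorem proposition4p2 (G : gauss_diagram) (n : nat) (HG : valid_gauss G) :
  span_t G n <= (#|Cn G n|)%:R.
Proof.
have h := lspan_bound n HG.
rewrite /span_t ler_pdivrMr ?ltr0n //.
have : (lspan (jonesV_u G n))%:~R <= (4 * (#|Cn G n|)%:Z)%:~R :> rat by rewrite ler_int.
by rewrite intrM mulrC.
Qed.
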